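(* For real $0\le x<1$, $$ \begin{aligned} \mathcal C_2\left(\tfrac x2\right)&=\left(2\cos\tfrac{\pi x}{2}\right)^{\frac x2}\exp\left(\frac1{2\pi}\sum_{n=1}^\infty \frac{(-1)^n\sin(\pi nx)}{n^{2}}\right), \\ \mathcal C_3\left(\tfrac x2\right)&=\left(2\cos\tfrac{\pi x}{2}\right)^{(\frac x2)^2}\exp\biggl(\frac1{2\pi^2}\sum_{n=1}^\infty \frac{(-1)^n\cos(\pi nx)}{n^{3}} +\frac x{2\pi}\sum_{n=1}^\infty \frac{(-1)^n\sin(\pi nx)}{n^{2}}+\frac1{2\pi^2}\zeta_E(3)\biggr),\\ \mathcal C_4\left(\tfrac x2\right)&=\left(2\cos\tfrac{\pi x}{2}\right)^{(\frac x2)^3}\exp\biggl(\frac{3x}{4\pi^2}\sum_{n=1}^\infty \frac{(-1)^n\cos(\pi nx)}{n^{3}} -\frac 3{4\pi^3}\sum_{n=1}^\infty \frac{(-1)^n\sin(\pi nx)}{n^{4}}+\frac{3x^2}{8\pi}\sum_{n=1}^\infty \frac{(-1)^n\sin(\pi nx)}{n^{2}}\biggr), \\ \mathcal C_5\left(\tfrac x2\right)&=\left(2\cos\tfrac{\pi x}{2}\right)^{(\frac x2)^4}\exp\biggl(-\frac{3}{2\pi^4}\sum_{n=1}^\infty \frac{(-1)^n\cos(\pi nx)}{n^{5}} +\frac{3x^2}{4\pi^2}\sum_{n=1}^\infty \frac{(-1)^n\cos(\pi nx)}{n^{3}}-\frac{3x}{2\pi^3}\sum_{n=1}^\infty \frac{(-1)^n\sin(\pi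 nx)}{n^{4}} \\ &\qquad+\frac{x^3}{4\pi}\sum_{n=1}^\infty \frac{(-1)^n\sin(\pi nx)}{n^{2}}-\frac3{2\pi^4}\zeta_E(5) \biggr). \end{aligned} $$
   Context: For an integer $r\ge2$ let $P_r(y)=(1-y)\exp\left(y+\frac{y^2}{2}+\cdots+\frac{y^r}{r}\right)$. For real $|x|<\tfrac12$, the Kurokawa–Koyama multiple cosine function of order $r$ is the convergent positive product $\mathcal C_r(x)=\prod_{n\ge1,\ n\text{ odd}}\left\{P_r\left(\frac{x}{n/2}\right)P_r\left(-\frac{x}{n/2}\right)^{(-1)^{r-1}}\right\}^{(n/2)^{r-1}}$. $\zeta_E(s)=\sum_{n=1}^\infty\frac{(-1)^{n+1}}{n^s}$. *)

(* Defs.v *)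
From Stdlib Require Import Reals.
From Coquelicot Require Import Coquelicot.
Open Scope R_scope.

Definition Pr (r : nat) (y : R) : R :=
  (1 - y) * exp (sum_f_R0 (fun k => y ^ (k + 1) / INR (k + 1)) (r - 1)).

Definition mcos_factor (r : nat) (x : R) (m : nat) : R :=
  let h := INR m / 2 in
  Rpower (Pr r (x / h) * Rpower (Pr r (- (x / h))) ((-1) ^ (r - 1)))
         (h ^ (r - 1)).

Fixpoint mcos_partial (r : nat) (x : R) (N : nat) : R :=
  match N with
  | O => 1
  | S N' => mcos_partial r x N' * mcos_factor r x (2 * N' + 1)
  end.

(* The Kurokawa--Koyama multiple cosine C_r(x) as the limit of its partial
   products (the product converges for |x| < 1/2). *)
Definition mcos (r : nat) (x : R) : Rbar := Lim_seq (mcos_partial r x).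

Definition Ssin (k : nat) (x : R) : R :=
  Series (fun m => (-1) ^ (m + 1) * sin (PI * INR (m + 1) * x) / INR (m + 1) ^ k).

Definition Scos (k : nat) (x : R) : R :=
  Series (fun m => (-1) ^ (m + 1) * cos (PI * INR (m + 1) * x) / INR (m + 1) ^ k).

Definition zetaE (s : nat) : R :=
  Series (fun m => (-1) ^ m / INR (m + 1) ^ s).

(* Main.v *)
Require Import Defs.
From Stdlib Require Import Reals Lra Lia Factorial.
From Coquelicot Require Import Coquelicot.
Open Scope R_scope.

Lemma is_series_sum (a : nat -> R) (l : R) :
  is_series a l <-> is_lim_seq (fun N => sum_f_R0 a N) l.
Proof. rewrite is_series_Reals, is_lim_seq_Reals. reflexivity. Qed.

Lemma ex_series_R_le (a b : nat -> R) :
  (forall n, Rabs (a n) <= b n) -> ex_series b -> ex_series a.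
Proof. intros H Hb. apply (ex_series_le a b); auto. Qed.

Lemma Series_Rabs_le (a b : nat -> R) :
  (forall n, Rabs (a n) <= b n) -> ex_series b -> Rabs (Series a) <= Series b.
Proof.
  intros H Hb.
  assert (Ha : ex_series (fun n => Rabs (a n))).
  { apply (ex_series_R_le _ b); auto. intro n; rewrite Rabs_Rabsolu; auto. }
  eapply Rle_trans. apply Series_Rabs; auto.
  apply Series_le; auto. intro n; split; auto using Rabs_pos.
Qed.

Lemma lim_inv_lin (c : R) : is_lim_seq (fun N => / (INR N + c)) 0.
Proof.
  replace (Finite 0) with (Rbar_inv p_infty) by reflexivity.
  apply is_lim_seq_inv. 2: discriminate.
  eapply is_lim_seq_plus. apply is_lim_seq_INR. apply is_lim_seq_const.
  reflexivity.
Qed.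

Lemma ex_series_inv_sq : ex_series (fun n => / (INR n + 1) ^ 2).
Proof.
  set (b := fun n => 2 * (/ (INR n + 1) - / (INR n + 2))).
  assert (Hs : forall N, sum_f_R0 b N = 2 * (1 - / (INR N + 2))).
  { induction N; simpl sum_f_R0. unfold b; simpl; field.
    rewrite IHN. unfold b. rewrite S_INR. field.
    pose proof (pos_INR N); split; lra. }
  apply (ex_series_R_le _ b).
  - intro n. unfold b. pose proof (pos_INR n).
    replace (2 * (/ (INR n + 1) - / (INR n + 2))) with (/ ((INR n + 1) * (INR n + 2) / 2)) by (field; lra).
    rewrite Rabs_pos_eq.
    2:{ apply Rlt_le, Rinv_0_lt_compat; nra. }
    apply Rinv_le_contravar. nra. nra.
  - exists 2. apply is_series_sum.
    apply is_lim_seq_ext with (fun N => 2 * (1 - / (INR N + 2))).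
    intro; rewrite Hs; auto.
    assert (H := is_lim_seq_scal_l _ 2 _ (is_lim_seq_minus' _ _ 1 0 (is_lim_seq_const 1) (lim_inv_lin 2))).
    simpl in H. replace (2*(1-0)) with 2 in H by ring. exact H.
Qed.

Lemma Series_tail (a : nat -> R) (n : nat) : ex_series a ->
  Series a - sum_f_R0 a n = Series (fun k => a (S n + k)%nat).
Proof.
  intro H. rewrite (Series_incr_n a (S n)); [|lia|auto]. simpl pred. ring.
Qed.

Lemma series_lim (a : nat -> R) : ex_series a ->
  is_lim_seq (fun N => sum_f_R0 a N) (Series a).
Proof. intro H. apply is_series_sum. apply Series_correct. auto. Qed.

Lemma CVU_series (u : nat -> R -> R) (M : nat -> R) c (r : posreal) :
  (forall n y, Boule c r y -> Rabs (u n y) <= M n) -> ex_series M ->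
  CVU (fun n y => sum_f_R0 (fun k => u k y) n) (fun y => Series (fun k => u k y)) c r.
Proof.
  intros HM HMs eps Heps.
  assert (Hl := series_lim M HMs).
  apply is_lim_seq_Reals in Hl.
  destruct (Hl eps Heps) as [N HN].
  exists N. intros n y Hn Hy.
  assert (Hu : ex_series (fun k => u k y)).
  { apply (ex_series_R_le _ M); auto. }
  rewrite Series_tail by auto.
  eapply Rle_lt_trans.
  apply (Series_Rabs_le _ (fun k => M (S n + k)%nat)).
  intro k; apply HM; auto.
  apply (ex_series_incr_n M (S n)) in HMs. exact HMs.
  rewrite <- Series_tail by auto.
  specialize (HN n Hn). unfold Rdist in HN.
  rewrite Rabs_minus_sym in HN.
  eapply Rle_lt_trans. apply Rle_abs. exact HN.
Qed.

Lemma deriv_sum (u u' : nat -> R -> R) y :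
  (forall n, derivable_pt_lim (u n) y (u' n y)) ->
  forall N, derivable_pt_lim (fun y => sum_f_R0 (fun k => u k y) N) y
                             (sum_f_R0 (fun k => u' k y) N).
Proof.
  intros H N; induction N; simpl.
  - apply H.
  - apply (derivable_pt_lim_plus (fun y => sum_f_R0 (fun k => u k y) N) (u (S N))); auto.
Qed.

Lemma deriv_series (u u' : nat -> R -> R) (M : nat -> R) c (r : posreal) :
  (forall n y, Boule c r y -> derivable_pt_lim (u n) y (u' n y)) ->
  (forall n y, Boule c r y -> Rabs (u' n y) <= M n) -> ex_series M ->
  (forall y, Boule c r y -> ex_series (fun n => u n y)) ->
  forall y, Boule c r y ->
  derivable_pt_lim (fun y => Series (fun n => u n y)) y (Series (fun n => u' n y)).
Proof.
  intros Hd HM HMs Hex.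
  apply (CVU_derivable (fun n y => sum_f_R0 (fun k => u k y) n)
                       (fun n y => sum_f_R0 (fun k => u' k y) n)
                       (fun y => Series (fun n => u n y))
                       (fun y => Series (fun n => u' n y)) c r).
  - apply (CVU_series u' M); auto.
  - intros x Hx. apply is_lim_seq_Reals. apply series_lim. auto.
  - intros n x Hx. apply deriv_sum. intro k; auto.
Qed.

Lemma zero_deriv_eq (D : R -> R) a b : a <= b ->
  (forall z, a < z < b -> derivable_pt_lim D z 0) ->
  (forall z, a <= z <= b -> continuity_pt D z) -> D b = D a.
Proof.
  intros Hab Hd Hc.
  assert (pr : forall x, a < x < b -> derivable_pt D x).
  { intros x Hx. exists 0. apply Hd; auto. }
  assert (H := null_derivative_loc D a b pr Hc).
  apply H. intros x P. apply derive_pt_eq_0. apply Hd; auto.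
  lra.
Qed.

Lemma dcont (f : R -> R) x l : derivable_pt_lim f x l -> continuity_pt f x.
Proof. intro H. apply derivable_continuous_pt. exists l. auto. Qed.

Lemma ex_series_Mscal (c : R) (a : nat -> R) : ex_series a -> ex_series (fun n => c * a n).
Proof. intro H. apply (ex_series_scal_l c a H). Qed.

Lemma lim_uniq (u : nat -> R) (l1 l2 : R) : is_lim_seq u l1 -> is_lim_seq u l2 -> l1 = l2.
Proof.
  intros H1 H2. apply is_lim_seq_unique in H1. apply is_lim_seq_unique in H2.
  rewrite H1 in H2. injection H2. auto.
Qed.

Lemma Series_zero (a : nat -> R) : (forall n, a n = 0) -> Series a = 0.
Proof.
  intro H. rewrite (Series_ext a (fun n => 0 * a n)).
  rewrite Series_scal_l. ring. intro n; rewrite H; ring.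
Qed.

Lemma cont_ex_derive (f : R -> R) x : ex_derive f x -> continuity_pt f x.
Proof. intro H. apply continuity_pt_filterlim. apply (ex_derive_continuous (V:=R_NormedModule) f x H). Qed.

Lemma cont_to_eps (f : R -> R) x : continuity_pt f x ->
  forall eps, 0 < eps -> exists d, 0 < d /\ forall y, Rabs (y - x) < d -> Rabs (f y - f x) < eps.
Proof.
  intros H eps He. destruct (H eps He) as [d [Hd Hy]].
  exists d; split; auto. intros y Hyx.
  destruct (Req_dec y x) as [->|Hne].
  - rewrite Rminus_diag, Rabs_R0; auto.
  - apply (Hy y). split. split. exact I. auto. exact Hyx.
Qed.

Lemma eps_to_cont (f : R -> R) x :
  (forall eps, 0 < eps -> exists d, 0 < d /\ forall y, Rabs (y - x) < d -> Rabs (f y - f x) < eps) ->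
  continuity_pt f x.
Proof.
  intros H eps He. destruct (H eps He) as [d [Hd Hy]].
  exists d; split; auto. intros y [_ Hyx]. apply Hy. exact Hyx.
Qed.

Lemma subseq_ev (phi : nat -> nat) : (forall n, (n <= phi n)%nat) ->
  filterlim phi eventually eventually.
Proof.
  intros Hphi P [N HN]. exists N. intros n Hn. apply HN. specialize (Hphi n). lia.
Qed.

Lemma div_bound a b c d : Rabs a <= c -> 0 < d <= Rabs b -> Rabs (a / b) <= c / d.
Proof.
  intros Ha [Hd Hb]. unfold Rdiv. rewrite Rabs_mult, Rabs_inv.
  apply Rmult_le_compat; auto using Rabs_pos.
  apply Rlt_le, Rinv_0_lt_compat; lra.
  apply Rinv_le_contravar; auto.
Qed.

Lemma lim_opp (u : nat -> R) (l : R) : is_lim_seq u l -> is_lim_seq (fun n => - u n) (- l).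
Proof. intro H. apply (proj1 (is_lim_seq_opp u l)) in H. exact H. Qed.

Lemma lim_scal (u : nat -> R) (c l : R) : is_lim_seq u l -> is_lim_seq (fun n => c * u n) (c * l).
Proof. intro H. apply (is_lim_seq_scal_l u c l) in H. exact H. Qed.

Fixpoint gS (N : nat) (x : R) : R :=
  match N with O => 1 / x | S n => gS n x + 2 * x / (x ^ 2 - INR (S n) ^ 2) end.

Definition gt_term (x : R) (n : nat) := 2 * x / (x ^ 2 - INR (S (S n)) ^ 2).
Definition gt_dterm (x : R) (n : nat) :=
  - 2 * (x ^ 2 + INR (S (S n)) ^ 2) / (x ^ 2 - INR (S (S n)) ^ 2) ^ 2.
Definition gt (x : R) := Series (gt_term x).
Definition Kf (x : R) := 2 * x / (x ^ 2 - 1) + gt x.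
Definition gf (x : R) := 1 / x + Kf x.

Lemma INRSS n : INR (S (S n)) = INR n + 2.
Proof. rewrite !S_INR; ring. Qed.

Lemma gt_bound n x : Rabs x < 3/2 -> Rabs (gt_term x n) <= 3 * / (INR n + 1) ^ 2.
Proof.
  intro Hx. apply Rabs_def2 in Hx. unfold gt_term. rewrite INRSS. pose proof (pos_INR n).
  replace (3 * / (INR n + 1) ^ 2) with (3 / (INR n + 1)^2) by (unfold Rdiv; ring).
  apply div_bound.
  - rewrite Rabs_mult, (Rabs_pos_eq 2) by lra.
    destruct (Rle_dec 0 x); [rewrite Rabs_pos_eq|rewrite Rabs_left]; lra.
  - split. nra. rewrite Rabs_left by nra. nra.
Qed.

Lemma gt_dbound n x : Rabs x < 3/2 -> Rabs (gt_dterm x n) <= 14 * / (INR n + 1) ^ 2.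
Proof.
  intro Hx. apply Rabs_def2 in Hx. unfold gt_dterm. rewrite INRSS. pose proof (pos_INR n).
  assert (D : (INR n + 1)^2 <= (INR n + 2)^2 - x^2) by nra.
  replace (14 * / (INR n + 1) ^ 2) with (14 * (INR n + 1)^2 / ((INR n + 1)^2)^2)
    by (field; nra).
  apply div_bound.
  - assert (x^2 <= 9/4) by nra. rewrite Rabs_mult. rewrite Rabs_left by lra. rewrite Rabs_pos_eq by nra. nra.
  - split. nra. rewrite Rabs_pos_eq by nra.
    replace ((x^2 - (INR n+2)^2)^2) with (((INR n+2)^2 - x^2)^2) by ring.
    apply pow_incr. nra.
Qed.

Lemma ex_series_M (c : R) : ex_series (fun n => c * / (INR n + 1) ^ 2).
Proof. apply ex_series_Mscal, ex_series_inv_sq. Qed.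

Lemma gt_ex x : Rabs x < 3/2 -> ex_series (gt_term x).
Proof. intro Hx. apply (ex_series_R_le _ _ (fun n => gt_bound n x Hx)), ex_series_M. Qed.

Lemma gt_deriv y : Rabs y < 3/2 -> derivable_pt_lim gt y (Series (gt_dterm y)).
Proof.
  intro Hy.
  assert (Hr : 0 < 3/2) by lra.
  apply (deriv_series (fun n x => gt_term x n) (fun n x => gt_dterm x n)
           (fun n => 14 * / (INR n + 1) ^ 2) 0 (mkposreal _ Hr)).
  - intros n x Hx. unfold Boule in Hx; simpl in Hx; rewrite Rminus_0_r in Hx.
    apply Rabs_def2 in Hx. apply is_derive_Reals. unfold gt_term, gt_dterm.
    rewrite INRSS. pose proof (pos_INR n).
    auto_derive. nra. field. nra.
  - intros n x Hx. unfold Boule in Hx; simpl in Hx; rewrite Rminus_0_r in Hx.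
    apply gt_dbound; auto.
  - apply ex_series_M.
  - intros x Hx. unfold Boule in Hx; simpl in Hx; rewrite Rminus_0_r in Hx. apply gt_ex; auto.
  - unfold Boule; simpl; rewrite Rminus_0_r; auto.
Qed.

Lemma gt_exd y : Rabs y < 3/2 -> ex_derive gt y.
Proof. intro Hy. exists (Series (gt_dterm y)). apply is_derive_Reals, gt_deriv; auto. Qed.

Lemma gt0 : gt 0 = 0.
Proof. unfold gt. apply Series_zero. intro n; unfold gt_term; field.
  rewrite INRSS. pose proof (pos_INR n). nra. Qed.

Lemma gS_SS N x : gS (S (S N)) x = 1 / x + 2 * x / (x ^ 2 - 1) + sum_f_R0 (gt_term x) N.
Proof.
  induction N.
  - simpl sum_f_R0. cbn [gS]. unfold gt_term. change (INR 1) with 1. rewrite pow1. ring.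
  - cbn [gS sum_f_R0] in *. rewrite IHN. unfold gt_term. ring.
Qed.

Lemma gS_lim x : 0 < x < 1 -> is_lim_seq (fun N => gS N x) (gf x).
Proof.
  intro Hx. apply (is_lim_seq_incr_n _ 2).
  apply is_lim_seq_ext with (fun N => (1 / x + 2 * x / (x ^ 2 - 1)) + sum_f_R0 (gt_term x) N).
  { intro n. replace (n + 2)%nat with (S (S n)) by lia. rewrite gS_SS. ring. }
  unfold gf, Kf. rewrite <- Rplus_assoc.
  apply is_lim_seq_plus'. apply is_lim_seq_const.
  apply series_lim. apply gt_ex. rewrite Rabs_pos_eq; lra.
Qed.

Lemma gS_sym N x : 0 < x < 1 -> gS N (1 - x) = - gS N x + 1 / (x + INR N) - 1 / (x - INR N - 1).
Proof.
  intro Hx. induction N.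
  - cbn [gS INR]. field. lra.
  - cbn [gS]. rewrite IHN. rewrite S_INR. pose proof (pos_INR N).
    field. repeat split; nra.
Qed.

Lemma gf_sym x : 0 < x < 1 -> gf (1 - x) = - gf x.
Proof.
  intro Hx.
  apply (lim_uniq (fun N => gS N (1 - x))). apply gS_lim; lra.
  apply is_lim_seq_ext with (fun N => - gS N x + / (INR N + x) - - / (INR N + (1 - x))).
  { intro N. rewrite gS_sym by auto. pose proof (pos_INR N). field. split; lra. }
  replace (- gf x) with (- gf x + 0 - - 0) by ring.
  apply is_lim_seq_minus'. apply is_lim_seq_plus'. apply lim_opp. apply gS_lim; auto.
  apply lim_inv_lin. apply lim_opp. apply lim_inv_lin.
Qed.

Lemma gS_dup N x : 0 < x < 1 ->
  gS N (x / 2) + gS N ((x + 1) / 2) = 2 * gS (2 * N) x + 2 / (x + 2 * INR N + 1).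
Proof.
  intro Hx. induction N.
  - replace (2 * 0)%nat with 0%nat by lia. cbn [gS INR]. field. lra.
  - replace (2 * S N)%nat with (S (S (2 * N))) by lia.
    cbn [gS].
    assert (E: forall a b c d : R, a + b + (c + d) = (a + c) + (b + d)) by (intros; ring).
    rewrite E. clear E.
    rewrite IHN. rewrite !S_INR, mult_INR. change (INR 2) with (1 + 1).
    pose proof (pos_INR N).
    field. repeat split; nra.
Qed.

Lemma lim_inv_lin2 (c : R) : -1 < c -> is_lim_seq (fun N => 2 / (c + 2 * INR N + 1)) 0.
Proof.
  intro Hc.
  apply is_lim_seq_ext with (fun N => / (INR N + (c + 1) / 2)).
  { intro N. pose proof (pos_INR N). field. lra. }
  apply lim_inv_lin.
Qed.

Lemma gf_dup x : 0 < x < 1 -> gf (x / 2) + gf ((x + 1) / 2) = 2 * gf x.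
Proof.
  intro Hx.
  apply (lim_uniq (fun N => gS N (x / 2) + gS N ((x + 1) / 2))).
  apply is_lim_seq_plus'; apply gS_lim; lra.
  apply is_lim_seq_ext with (fun N => 2 * gS (2 * N) x + 2 / (x + 2 * INR N + 1)).
  { intro N. rewrite gS_dup; auto. }
  replace (2 * gf x) with (2 * gf x + 0) by ring.
  apply is_lim_seq_plus'. apply lim_scal.
  apply (is_lim_seq_subseq (fun N => gS N x) (gf x) (fun N => 2 * N)%nat).
  apply subseq_ev; intro; lia. apply gS_lim; auto.
  apply lim_inv_lin2; lra.
Qed.

Definition ct (x : R) := PI * cos (PI * x) / sin (PI * x).

Lemma ct_dup x : 0 < x < 1 -> ct (x / 2) + ct ((x + 1) / 2) = 2 * ct x.
Proof.
  intro Hx. unfold ct.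
  set (a := PI * x / 2).
  replace (PI * (x / 2)) with a by (unfold a; field).
  replace (PI * ((x + 1) / 2)) with (a + PI / 2) by (unfold a; field).
  replace (PI * x) with (2 * a) by (unfold a; field).
  rewrite sin_2a, cos_2a.
  rewrite cos_plus, sin_plus, cos_PI2, sin_PI2.
  assert (0 < sin a). { apply sin_gt_0; unfold a; pose proof PI_RGT_0; nra. }
  assert (0 < cos a). { apply cos_gt_0; unfold a; pose proof PI_RGT_0; nra. }
  field. lra.
Qed.

Lemma ct_sym x : ct (1 - x) = - ct x.
Proof.
  unfold ct. replace (PI * (1 - x)) with (PI - PI * x) by ring.
  rewrite cos_minus, sin_minus, cos_PI, sin_PI.
  unfold Rdiv. replace (-1 * cos (PI * x) + 0 * sin (PI * x)) with (- cos (PI * x)) by ring.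
  replace (0 * cos (PI * x) - -1 * sin (PI * x)) with (sin (PI * x)) by ring. ring.
Qed.

Lemma INR_fact_eval n z : Z.of_nat (fact n) = z -> INR (fact n) = IZR z.
Proof. intro H; rewrite INR_IZR_INZ, H; reflexivity. Qed.
Ltac evfact := repeat match goal with |- context [INR (fact ?n)] =>
  let z := eval vm_compute in (Z.of_nat (fact n)) in
  rewrite (INR_fact_eval n z (eq_refl)) end.
Lemma sin_lb_eq a : sin_lb a = a - a^3/6 + a^5/120 - a^7/5040.
unfold sin_lb, sin_approx, sin_term. cbn [sum_f_R0]. evfact. simpl pow. field. Qed.
Lemma cos_ub_eq a : cos_ub a = 1 - a^2/2 + a^4/24 - a^6/720 + a^8/40320.
unfold cos_ub, cos_approx, cos_term. cbn [sum_f_R0]. evfact. simpl pow. field. Qed.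
Lemma sin_ub_eq a : sin_ub a = a - a^3/6 + a^5/120 - a^7/5040 + a^9/362880.
unfold sin_ub, sin_approx, sin_term. cbn [sum_f_R0]. evfact. simpl pow. field. Qed.
Lemma cos_lb_eq a : cos_lb a = 1 - a^2/2 + a^4/24 - a^6/720.
unfold cos_lb, cos_approx, cos_term. cbn [sum_f_R0]. evfact. simpl pow. field. Qed.

Lemma PI_bounds : 3 < PI <= 4.
Proof. split. pose proof PI2_3_2; lra. apply PI_4. Qed.

Lemma trig_small u : 0 < u <= 1 -> u / 2 <= sin u /\ Rabs (u * cos u - sin u) <= u^3.
Proof.
  intros Hu. destruct PI_bounds as [HP3 HP4].
  destruct (SIN u) as [S1 S2]; try lra. destruct (COS u) as [C1 C2]; try lra.
  rewrite sin_lb_eq in S1; rewrite sin_ub_eq in S2; rewrite cos_lb_eq in C1; rewrite cos_ub_eq in C2.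
  assert (Hp : 0 < u*u <= 1) by nra.
  set (p := u*u) in *.
  assert (E3 : u^3 = u*p) by (unfold p; ring).
  assert (E5 : u^5 = u*p*p) by (unfold p; ring).
  assert (E7 : u^7 = u*p*p*p) by (unfold p; ring).
  assert (E9 : u^9 = u*p*p*p*p) by (unfold p; ring).
  assert (E2 : u^2 = p) by (unfold p; ring).
  assert (E4 : u^4 = p*p) by (unfold p; ring).
  assert (E6 : u^6 = p*p*p) by (unfold p; ring).
  assert (E8 : u^8 = p*p*p*p) by (unfold p; ring).
  rewrite ?E3, ?E5, ?E7, ?E9, ?E2, ?E4, ?E6, ?E8 in *.
  assert (pp : 0 < p*p <= 1) by nra.
  assert (ppp : 0 < p*p*p <= 1) by nra.
  assert (pppp : 0 < p*p*p*p <= 1) by nra.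
  split. nra.
  apply Rabs_le. split.
  - assert (u * cos u >= u * (1 - p/2 + p*p/24 - p*p*p/720)) by nra. nra.
  - assert (u * cos u <= u * (1 - p / 2 + p * p / 24 - p * p * p / 720 + p * p * p * p / 40320)) by nra. nra.
Qed.

Lemma W_bound y : 0 < y <= 1/4 -> Rabs (ct y - 1 / y) <= 2 * PI * (PI * y).
Proof.
  intro Hy. destruct PI_bounds as [HP3 HP4].
  set (u := PI * y).
  assert (Hu : 0 < u <= 1) by (unfold u; nra).
  destruct (trig_small u Hu) as [Hs Hc].
  replace (ct y - 1 / y) with (PI * (u * cos u - sin u) / (u * sin u)).
  2:{ unfold ct. fold u. replace (1 / y) with (PI / u) by (unfold u; field; lra). field. lra. }
  replace (2 * PI * u) with (PI * u ^ 3 / (u * (u / 2))) by (field; lra).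
  apply div_bound.
  - rewrite Rabs_mult, Rabs_pos_eq by lra. apply Rmult_le_compat_l; lra.
  - split. nra. rewrite Rabs_pos_eq by nra. apply Rmult_le_compat_l; lra.
Qed.

Definition Hf (x : R) : R :=
  if Rlt_dec 0 x then (if Rlt_dec x 1 then ct x - gf x else 0) else 0.

Lemma Hf_in x : 0 < x < 1 -> Hf x = ct x - gf x.
Proof. intro H. unfold Hf. destruct (Rlt_dec 0 x); destruct (Rlt_dec x 1); lra. Qed.

Lemma Hf_out x : ~ (0 < x < 1) -> Hf x = 0.
Proof. intro H. unfold Hf. destruct (Rlt_dec 0 x); destruct (Rlt_dec x 1); auto; lra. Qed.

Lemma Hf_sym x : Hf (1 - x) = - Hf x.
Proof.
  destruct (Rlt_dec 0 x); destruct (Rlt_dec x 1).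
  - rewrite !Hf_in by lra. rewrite ct_sym, gf_sym by lra. ring.
  - rewrite !Hf_out by lra. ring.
  - rewrite !Hf_out by lra. ring.
  - rewrite !Hf_out by lra. ring.
Qed.

Lemma Hf_dup x : 0 < x < 1 -> Hf (x / 2) + Hf ((x + 1) / 2) = 2 * Hf x.
Proof.
  intro H. rewrite !Hf_in by lra.
  replace (ct (x / 2) - gf (x / 2) + (ct ((x + 1) / 2) - gf ((x + 1) / 2)))
    with ((ct (x / 2) + ct ((x + 1) / 2)) - (gf (x / 2) + gf ((x + 1) / 2))) by ring.
  rewrite ct_dup, gf_dup by auto. ring.
Qed.

Lemma Hf_cont_int c : 0 < c < 1 -> continuity_pt Hf c.
Proof.
  intro Hc. destruct PI_bounds as [HP3 HP4].
  apply (continuity_pt_locally_ext (fun y => ct y - (1 / y + (2 * y / (y ^ 2 - 1) + gt y)))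
           Hf (Rmin c (1 - c))).
  - apply Rmin_glb_lt; lra.
  - intros y Hy. unfold Rdist in Hy. apply Rabs_def2 in Hy.
    assert (c <= 1 - c \/ 1 - c <= c) as [h|h] by lra.
    + rewrite Rmin_left in Hy by lra. rewrite Hf_in by lra. reflexivity.
    + rewrite Rmin_right in Hy by lra. rewrite Hf_in by lra. reflexivity.
  - apply cont_ex_derive. unfold ct.
    assert (0 < sin (PI * c)) by (apply sin_gt_0; nra).
    auto_derive. repeat split; try lra. nra.
    apply gt_exd. rewrite Rabs_pos_eq; lra.
Qed.

Lemma Kf0 : Kf 0 = 0.
Proof. unfold Kf. rewrite gt0. field. Qed.

Lemma Hf_cont0 : continuity_pt Hf 0.
Proof.
  destruct PI_bounds as [HP3 HP4].
  apply eps_to_cont. intros eps He.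
  assert (HK : continuity_pt Kf 0).
  { apply cont_ex_derive. unfold Kf. auto_derive.
    repeat match goal with |- _ /\ _ => split end; try exact I; try nra.
    apply gt_exd. rewrite Rabs_R0; lra. }
  destruct (cont_to_eps Kf 0 HK (eps / 2)) as [d1 [Hd1 HK1]]; [lra|].
  rewrite Kf0 in HK1.
  exists (Rmin d1 (Rmin (1/4) (eps / (4 * PI ^ 2)))). split.
  { apply Rmin_glb_lt; auto. apply Rmin_glb_lt; [lra|]. apply Rdiv_lt_0_compat; nra. }
  intros y Hy. rewrite Rminus_0_r in Hy.
  rewrite (Hf_out 0) by lra. rewrite Rminus_0_r.
  destruct (Rlt_dec 0 y) as [Hy0|Hy0].
  - assert (Hy1 : y < d1) by (eapply Rlt_le_trans; [eapply Rle_lt_trans; [apply Rle_abs|apply Hy]|apply Rmin_l]).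
    assert (Hy2 : y < 1/4) by (eapply Rlt_le_trans; [eapply Rle_lt_trans; [apply Rle_abs|apply Hy]|eapply Rle_trans; [apply Rmin_r|apply Rmin_l]]).
    assert (Hy3 : y < eps / (4 * PI ^ 2)) by (eapply Rlt_le_trans; [eapply Rle_lt_trans; [apply Rle_abs|apply Hy]|eapply Rle_trans; [apply Rmin_r|apply Rmin_r]]).
    rewrite Hf_in by lra. unfold gf.
    replace (ct y - (1 / y + Kf y)) with ((ct y - 1 / y) - Kf y) by ring.
    unfold Rminus at 1. eapply Rle_lt_trans. apply Rabs_triang.
    rewrite Rabs_Ropp. fold (ct y - 1 / y).
    assert (W := W_bound y (conj Hy0 (Rlt_le _ _ Hy2))).
    assert (K : Rabs (Kf y) < eps/2).
    { specialize (HK1 y). rewrite !Rminus_0_r in HK1. apply HK1. rewrite Rabs_pos_eq; lra. }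
    assert (2 * PI * (PI * y) < eps / 2).
    { apply Rmult_lt_compat_r with (r := 4 * PI ^ 2) in Hy3; [|nra].
      replace (eps / (4 * PI ^ 2) * (4 * PI ^ 2)) with eps in Hy3 by (field; lra). nra. }
    lra.
  - rewrite Hf_out by lra. rewrite Rabs_R0. lra.
Qed.

Lemma Hf_cont1 : continuity_pt Hf 1.
Proof.
  apply (continuity_pt_locally_ext (fun y => - Hf (1 - y)) Hf 1). lra.
  - intros y _. rewrite <- Hf_sym. f_equal. ring.
  - apply (continuity_pt_opp (fun y => Hf (1 - y))).
    apply (continuity_pt_comp (fun y => 1 - y) Hf).
    apply cont_ex_derive. auto_derive. auto.
    replace (1 - 1) with 0 by ring. apply Hf_cont0.
Qed.

Lemma Hf_cont c : 0 <= c <= 1 -> continuity_pt Hf c.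
Proof.
  intro Hc. destruct (Req_dec c 0) as [->|H0]. apply Hf_cont0.
  destruct (Req_dec c 1) as [->|H1]. apply Hf_cont1.
  apply Hf_cont_int; lra.
Qed.

Lemma herg (H : R -> R) :
  (forall c, 0 <= c <= 1 -> continuity_pt H c) -> H 0 = 0 -> H 1 = 0 ->
  (forall x, 0 < x < 1 -> H (x / 2) + H ((x + 1) / 2) = 2 * H x) ->
  forall x, 0 <= x <= 1 -> H x <= 0.
Proof.
  intros Hc H0 H1 Hd.
  destruct (continuity_ab_maj H 0 1) as [m [Hm Hm01]]; [lra|auto|].
  assert (Hmax : H m <= 0).
  { destruct (Req_dec m 0) as [->|Hm0]. lra.
    destruct (Req_dec m 1) as [->|Hm1]. lra.
    assert (Hk : forall k, H (m / 2 ^ k) = H m /\ 0 < m / 2 ^ k < 1).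
    { induction k.
      - simpl pow. replace (m / 1) with m by field. split; auto; lra.
      - destruct IHk as [IH1 IH2].
        set (z := m / 2 ^ k) in *.
        replace (m / 2 ^ S k) with (z / 2) by (unfold z; simpl pow; field; apply pow_nonzero; lra).
        assert (E := Hd z IH2). rewrite IH1 in E.
        assert (A := Hm ((z + 1) / 2) ltac:(lra)).
        assert (B := Hm (z / 2) ltac:(lra)).
        split; lra. }
    assert (L : is_lim_seq (fun k => m / 2 ^ k) 0).
    { apply is_lim_seq_ext with (fun k => m * (/ 2) ^ k).
      intro k. rewrite pow_inv. unfold Rdiv. auto.
      replace 0 with (m * 0) by ring. apply lim_scal. apply is_lim_seq_geom.
      rewrite Rabs_pos_eq; lra. }
    apply is_lim_seq_Reals in L.
    assert (L2 := continuity_seq H _ 0 (Hc 0 ltac:(lra)) L).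
    apply is_lim_seq_Reals in L2.
    rewrite H0 in L2.
    assert (H m = 0).
    { apply (lim_uniq (fun k => H (m / 2 ^ k))); auto.
      apply is_lim_seq_ext with (fun _ => H m). intro k; symmetry; apply Hk.
      apply is_lim_seq_const. }
    lra. }
  intros x Hx. eapply Rle_trans. apply Hm; auto. auto.
Qed.

Lemma Hf_zero x : 0 < x < 1 -> Hf x = 0.
Proof.
  intro Hx.
  assert (A := herg Hf Hf_cont (Hf_out 0 ltac:(lra)) (Hf_out 1 ltac:(lra)) Hf_dup x ltac:(lra)).
  assert (B := herg (fun x => - Hf x)).
  assert (- Hf x <= 0).
  { apply B; try lra.
    - intros c Hc. apply (continuity_pt_opp Hf). apply Hf_cont; auto.
    - rewrite Hf_out; lra.
    - rewrite Hf_out; lra.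
    - intros z Hz. assert (E := Hf_dup z Hz). cbv beta. lra. }
  lra.
Qed.

Lemma gf_ct x : 0 < x < 1 -> gf x = ct x.
Proof. intro Hx. assert (E := Hf_zero x Hx). rewrite Hf_in in E; auto. lra. Qed.

Definition Tterm (y : R) (j : nat) := 2 * y / ((INR (2 * j + 1) / 2) ^ 2 - y ^ 2).

Lemma TS_eq N y : 0 < y < 1/2 ->
  gS (S N) y - 2 * gS (2 * S N) (2 * y) = sum_f_R0 (Tterm y) N.
Proof.
  intro Hy. induction N.
  - replace (2 * 1)%nat with 2%nat by lia. cbn [gS sum_f_R0]. unfold Tterm.
    replace (2 * 0 + 1)%nat with 1%nat by lia. cbn [INR]. field.
    repeat split; nra.
  - transitivity ((gS (S N) y - 2 * gS (2 * S N) (2 * y)) +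
      (2 * y / (y ^ 2 - INR (S (S N)) ^ 2) -
       2 * (2 * (2 * y) / ((2 * y) ^ 2 - INR (S (2 * S N)) ^ 2) +
            2 * (2 * y) / ((2 * y) ^ 2 - INR (S (S (2 * S N))) ^ 2)))).
    { replace (2 * S (S N))%nat with (S (S (2 * S N))) by lia. cbn [gS]. ring. }
    rewrite IHN. cbn [sum_f_R0]. f_equal. unfold Tterm.
    repeat rewrite ?S_INR, ?mult_INR, ?plus_INR. cbn [INR].
    pose proof (pos_INR N). field. repeat split; nra.
Qed.

Lemma tan_pf y : 0 < y < 1/2 -> is_series (Tterm y) (PI * tan (PI * y)).
Proof.
  intro Hy. apply is_series_sum.
  apply is_lim_seq_ext with (fun N => gS (S N) y - 2 * gS (2 * S N) (2 * y)).
  { intro N. apply TS_eq; auto. }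
  replace (PI * tan (PI * y)) with (gf y - 2 * gf (2 * y)).
  - apply is_lim_seq_minus'.
    + apply (is_lim_seq_incr_1 (fun N => gS N y)). apply gS_lim; lra.
    + apply lim_scal.
      apply (is_lim_seq_subseq (fun N => gS N (2 * y)) (gf (2 * y)) (fun N => 2 * S N)%nat).
      apply subseq_ev; intro; lia. apply gS_lim; lra.
  - rewrite !gf_ct by lra. unfold ct, tan.
    replace (PI * (2 * y)) with (2 * (PI * y)) by ring.
    rewrite sin_2a, cos_2a.
    destruct PI_bounds.
    assert (0 < sin (PI * y)) by (apply sin_gt_0; nra).
    assert (0 < cos (PI * y)) by (apply cos_gt_0; nra).
    field. lra.
Qed.

Lemma cos_rec k t : cos (INR (S (S k)) * t) = 2 * cos t * cos (INR (S k) * t) - cos (INR k * t).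
Proof.
  replace (INR (S (S k)) * t) with (INR (S k) * t + t) by (rewrite (S_INR (S k)); ring).
  replace (INR k * t) with (INR (S k) * t - t) by (rewrite S_INR; ring).
  rewrite cos_plus, cos_minus. ring.
Qed.

Lemma geo_cos N q t :
  (1 - 2 * cos t * q + q ^ 2) * sum_f_R0 (fun n => q ^ n * cos (INR (S n) * t)) N =
  cos t - q + q ^ (S N) * (q * cos (INR (S N) * t) - cos (INR (S (S N)) * t)).
Proof.
  induction N.
  - cbn [sum_f_R0]. rewrite cos_rec. cbn [INR]. rewrite !Rmult_1_l, Rmult_0_l, cos_0. ring.
  - cbn [sum_f_R0]. rewrite Rmult_plus_distr_l, IHN.
    rewrite (cos_rec (S N)). cbn [pow]. ring.
Qed.

Lemma lim_bgeom (q B : R) (b : nat -> R) : Rabs q < 1 -> (forall N, Rabs (b N) <= B) ->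
  is_lim_seq (fun N => q ^ N * b N) 0.
Proof.
  intros Hq Hb. apply is_lim_seq_abs_0.
  apply is_lim_seq_le_le with (fun _ => 0) (fun N => B * Rabs q ^ N).
  - intro N. split. apply Rabs_pos. rewrite Rabs_mult, <- RPow_abs, Rmult_comm.
    apply Rmult_le_compat_r. apply pow_le, Rabs_pos. auto.
  - apply is_lim_seq_const.
  - replace (Finite 0) with (Finite (B * 0)) by (f_equal; ring).
    apply lim_scal. apply is_lim_seq_geom. rewrite Rabs_Rabsolu; auto.
Qed.

Lemma Dpos q t : Rabs q < 1 -> 0 < 1 - 2 * cos t * q + q ^ 2.
Proof.
  intro Hq. pose proof (COS_bound t). apply Rabs_def2 in Hq.
  assert (Hcq : - Rabs q <= cos t * q <= Rabs q).
  { destruct (Rle_dec 0 q); [rewrite Rabs_pos_eq by lra|rewrite Rabs_left by lra]; nra. }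
  destruct (Rle_dec 0 q); [rewrite Rabs_pos_eq in Hcq by lra|rewrite Rabs_left in Hcq by lra]; nra.
Qed.

Lemma cos_series q t : Rabs q < 1 ->
  is_series (fun n => q ^ n * cos (INR (S n) * t)) ((cos t - q) / (1 - 2 * cos t * q + q ^ 2)).
Proof.
  intro Hq. assert (HD := Dpos q t Hq). apply is_series_sum.
  apply is_lim_seq_ext with (fun N => (cos t - q) / (1 - 2 * cos t * q + q ^ 2) +
     / (1 - 2 * cos t * q + q ^ 2) * (q ^ (S N) * (q * cos (INR (S N) * t) - cos (INR (S (S N)) * t)))).
  { intro N. apply Rmult_eq_reg_l with (1 - 2 * cos t * q + q ^ 2). 2: lra.
    rewrite geo_cos. field. lra. }
  set (X := (cos t - q) / (1 - 2 * cos t * q + q ^ 2)).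
  set (D := 1 - 2 * cos t * q + q ^ 2).
  enough (LIM : is_lim_seq (fun N => q ^ S N * (q * cos (INR (S N) * t) - cos (INR (S (S N)) * t))) 0).
  { assert (L := is_lim_seq_plus' _ _ _ _ (is_lim_seq_const X) (lim_scal _ (/ D) 0 LIM)).
    rewrite Rmult_0_r, Rplus_0_r in L. exact L. }
  apply (is_lim_seq_incr_1 (fun N => q ^ N * (q * cos (INR N * t) - cos (INR (S N) * t)))).
  apply lim_bgeom with (Rabs q + 1). auto.
  intro N. eapply Rle_trans. apply Rabs_triang. rewrite Rabs_Ropp, Rabs_mult.
  pose proof (COS_bound (INR N * t)). pose proof (COS_bound (INR (S N) * t)).
  assert (Rabs (cos (INR N * t)) <= 1) by (apply Rabs_le; lra).
  assert (Rabs (cos (INR (S N) * t)) <= 1) by (apply Rabs_le; lra).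
  pose proof (Rabs_pos q). nra.
Qed.

Definition Cq_term (t r : R) (m : nat) := (-1) ^ (m + 1) * r ^ (m + 1) * cos (INR (m + 1) * t) / INR (m + 1).
Definition Cq_dterm (t r : R) (m : nat) := (-1) ^ (m + 1) * r ^ m * cos (INR (m + 1) * t).
Definition Cq (t r : R) := Series (fun m => Cq_term t r m).

Lemma abs_m1pow m : Rabs ((-1) ^ m) = 1.
Proof. rewrite <- RPow_abs. replace (Rabs (-1)) with 1 by (rewrite Rabs_left; lra). apply pow1. Qed.

Lemma Rabs_cos_le t : Rabs (cos t) <= 1.
Proof. pose proof (COS_bound t). apply Rabs_le; lra. Qed.

Lemma Cq_dterm_bound t r b m : Rabs r <= b -> Rabs (Cq_dterm t r m) <= b ^ m.
Proof.
  intro H. unfold Cq_dterm. rewrite !Rabs_mult, abs_m1pow, <- RPow_abs.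
  pose proof (Rabs_cos_le (INR (m + 1) * t)).
  assert (Rabs r ^ m <= b ^ m) by (apply pow_incr; split; auto using Rabs_pos).
  pose proof (pow_le (Rabs r) m (Rabs_pos r)). nra.
Qed.

Lemma Cq_term_bound t r b m : Rabs r <= b -> b <= 1 -> Rabs (Cq_term t r m) <= b ^ m.
Proof.
  intros H Hb. unfold Cq_term. pose proof (pos_INR m).
  pose proof (Rabs_cos_le (INR (m + 1) * t)).
  pose proof (Rabs_pos (cos (INR (m + 1) * t))).
  set (cc := cos (INR (m + 1) * t)) in *.
  replace (INR (m + 1)) with (INR m + 1) by (rewrite plus_INR; simpl; ring).
  unfold Rdiv. rewrite !Rabs_mult, abs_m1pow, <- RPow_abs, Rabs_inv, (Rabs_pos_eq (INR m + 1)) by lra.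
  assert (Rabs r ^ (m + 1) <= b ^ m).
  { replace (m + 1)%nat with (S m) by lia. simpl.
    assert (Rabs r ^ m <= b ^ m) by (apply pow_incr; split; auto using Rabs_pos).
    pose proof (pow_le (Rabs r) m (Rabs_pos r)). pose proof (Rabs_pos r). nra. }
  assert (0 < / (INR m + 1) <= 1).
  { split. apply Rinv_0_lt_compat; lra. rewrite <- Rinv_1. apply Rinv_le_contravar; lra. }
  pose proof (pow_le (Rabs r) (m + 1) (Rabs_pos r)).
  assert (Rabs r ^ (m + 1) * Rabs cc <= b ^ m) by nra.
  nra.
Qed.

Lemma ex_geom_b b : 0 <= b < 1 -> ex_series (fun m => b ^ m).
Proof. intro H. apply ex_series_geom. rewrite Rabs_pos_eq; lra. Qed.

Lemma Cq_deriv t b z : 0 <= b < 1 -> Rabs z < b ->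
  derivable_pt_lim (Cq t) z (Series (Cq_dterm t z)).
Proof.
  intros Hb Hz.
  assert (Hb0 : 0 < b) by (pose proof (Rabs_pos z); lra).
  apply (deriv_series (fun m r => Cq_term t r m) (fun m r => Cq_dterm t r m) (fun m => b ^ m) 0 (mkposreal b Hb0)).
  - intros m y Hy. apply is_derive_Reals. unfold Cq_term, Cq_dterm.
    auto_derive. auto.
    replace (m + 1)%nat with (S m) by lia. rewrite S_INR. simpl pred.
    pose proof (pos_INR m). field. lra.
  - intros m y Hy. unfold Boule in Hy; simpl in Hy. rewrite Rminus_0_r in Hy.
    apply Cq_dterm_bound; lra.
  - apply ex_geom_b; auto.
  - intros y Hy. unfold Boule in Hy; simpl in Hy. rewrite Rminus_0_r in Hy.
    apply (ex_series_R_le _ (fun m => b ^ m)). intro m; apply Cq_term_bound; lra.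
    apply ex_geom_b; auto.
  - unfold Boule; simpl. rewrite Rminus_0_r; auto.
Qed.

Lemma Cq_dseries t z : Rabs z < 1 ->
  Series (Cq_dterm t z) = - ((cos t + z) / (1 + 2 * z * cos t + z ^ 2)).
Proof.
  intro Hz.
  rewrite (Series_ext _ (fun m => - ((- z) ^ m * cos (INR (S m) * t)))).
  rewrite Series_opp. f_equal.
  - apply is_series_unique.
    replace ((cos t + z) / (1 + 2 * z * cos t + z ^ 2)) with
      ((cos t - - z) / (1 - 2 * cos t * - z + (- z) ^ 2)) by (f_equal; ring).
    apply cos_series. rewrite Rabs_Ropp; auto.
  - intro m. unfold Cq_dterm. replace (m + 1)%nat with (S m) by lia.
    replace (- z) with (-1 * z) by ring. rewrite Rpow_mult_distr. simpl pow. ring.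
Qed.

Lemma Cq_closed t r : 0 <= r < 1 -> Cq t r = - (1 / 2) * ln (1 + 2 * r * cos t + r ^ 2).
Proof.
  intro Hr.
  set (D := fun y => Cq t y + (1 / 2) * ln (1 + 2 * y * cos t + y ^ 2)).
  assert (HD : forall z, Rabs z < (r + 1) / 2 -> derivable_pt_lim D z 0).
  { intros z Hz.
    assert (Hz1 : Rabs z < 1) by lra.
    assert (Hpos : 0 < 1 + 2 * z * cos t + z ^ 2).
    { replace (1 + 2 * z * cos t + z ^ 2) with (1 - 2 * cos t * - z + (- z) ^ 2) by ring.
      apply Dpos. rewrite Rabs_Ropp; auto. }
    replace 0 with (Series (Cq_dterm t z) + (1 / 2) * ((2 * cos t + 2 * z) / (1 + 2 * z * cos t + z ^ 2))).
    2:{ rewrite Cq_dseries by auto. field. lra. }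
    apply (derivable_pt_lim_plus (Cq t) (fun y => (1 / 2) * ln (1 + 2 * y * cos t + y ^ 2))).
    - apply (Cq_deriv t ((r + 1) / 2)); auto. lra.
    - apply is_derive_Reals. auto_derive. lra. field. lra. }
  assert (E := zero_deriv_eq D 0 r ltac:(lra)).
  assert (D0 : D 0 = 0).
  { unfold D, Cq. rewrite (Series_zero (fun m => Cq_term t 0 m)).
    replace (1 + 2 * 0 * cos t + 0 ^ 2) with 1 by ring. rewrite ln_1. ring.
    intro m. unfold Cq_term. rewrite pow_i by lia. unfold Rdiv. ring. }
  assert (D r = 0).
  { rewrite <- D0. apply E.
    - intros z Hz. apply HD. rewrite Rabs_pos_eq; lra.
    - intros z Hz. apply (dcont D z 0). apply HD. rewrite Rabs_pos_eq; lra. }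
  unfold D in H. lra.
Qed.

Lemma ln_diff m a b : 0 < m -> m <= a -> m <= b -> Rabs (ln b - ln a) <= Rabs (b - a) / m.
Proof.
  intros Hm Ha Hb.
  assert (L : forall u v, 0 < u -> 0 < v -> ln v - ln u <= (v - u) / u).
  { intros u v Hu Hv. rewrite <- ln_div by auto.
    pose proof (exp_ineq1_le (ln (v / u))). rewrite exp_ln in H.
    replace ((v - u) / u) with (v / u - 1) by (field; lra). lra.
    apply Rdiv_lt_0_compat; auto. }
  assert (L1 := L a b ltac:(lra) ltac:(lra)). assert (L2 := L b a ltac:(lra) ltac:(lra)).
  assert (M : forall d u, 0 <= d -> m <= u -> d / u <= d / m).
  { intros d u Hd Hu. unfold Rdiv. apply Rmult_le_compat_l; auto. apply Rinv_le_contravar; lra. }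
  assert (P : forall d u, 0 <= d -> 0 < u -> 0 <= d / u).
  { intros d u Hd Hu. apply Rdiv_le_0_compat; auto. }
  destruct (Rle_dec a b).
  - rewrite (Rabs_pos_eq (b - a)) by lra. apply Rabs_le.
    assert (M1 := M (b - a) a ltac:(lra) Ha).
    assert (P1 := P (b - a) m ltac:(lra) Hm).
    assert ((a - b) / b = - ((b - a) / b)) by (field; lra).
    assert (P2 := P (b - a) b ltac:(lra) ltac:(lra)).
    set (q1 := (b - a) / a) in *. set (q2 := (b - a) / m) in *. set (q3 := (b - a) / b) in *.
    set (q4 := (a - b) / b) in *.
    split; lra.
  - rewrite (Rabs_left (b - a)) by lra. apply Rabs_le.
    assert (M1 := M (a - b) b ltac:(lra) Hb).
    assert (P1 := P (a - b) m ltac:(lra) Hm).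
    assert ((b - a) / a = - ((a - b) / a)) by (field; lra).
    assert (P2 := P (a - b) a ltac:(lra) ltac:(lra)).
    replace (- (b - a)) with (a - b) by ring.
    set (q1 := (a - b) / a) in *. set (q2 := (a - b) / m) in *. set (q3 := (a - b) / b) in *.
    set (q4 := (b - a) / a) in *.
    split; lra.
Qed.

Definition Psi_term (r x : R) (m : nat) :=
  (-1) ^ (m + 1) * r ^ (m + 1) * sin (PI * INR (m + 1) * x) / INR (m + 1) ^ 2.
Definition Psi (r x : R) := Series (fun m => Psi_term r x m).

Lemma INR_m1 m : INR (m + 1) = INR m + 1.
Proof. rewrite plus_INR; simpl; ring. Qed.

Lemma Rabs_sin_le t : Rabs (sin t) <= 1.
Proof. pose proof (SIN_bound t). apply Rabs_le; lra. Qed.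

Lemma Psi_term_bound r x m : Rabs r <= 1 -> Rabs (Psi_term r x m) <= / (INR m + 1) ^ 2.
Proof.
  intro Hr. unfold Psi_term. pose proof (pos_INR m).
  pose proof (Rabs_sin_le (PI * INR (m + 1) * x)).
  pose proof (Rabs_pos (sin (PI * INR (m + 1) * x))).
  set (ss := sin (PI * INR (m + 1) * x)) in *.
  rewrite INR_m1.
  unfold Rdiv. rewrite !Rabs_mult, abs_m1pow, <- RPow_abs, Rabs_inv, (Rabs_pos_eq ((INR m + 1) ^ 2)) by nra.
  assert (Rabs r ^ (m + 1) <= 1) by (rewrite <- (pow1 (m + 1)); apply pow_incr; split; auto using Rabs_pos).
  pose proof (pow_le (Rabs r) (m + 1) (Rabs_pos r)).
  assert (0 < / (INR m + 1) ^ 2) by (apply Rinv_0_lt_compat; nra).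
  assert (Rabs r ^ (m + 1) * Rabs ss <= 1) by nra.
  nra.
Qed.

Lemma Psi_deriv r x : 0 <= r < 1 ->
  derivable_pt_lim (Psi r) x (- (PI / 2) * ln (1 + 2 * r * cos (PI * x) + r ^ 2)).
Proof.
  intro Hr.
  replace (- (PI / 2) * ln (1 + 2 * r * cos (PI * x) + r ^ 2)) with
    (Series (fun m => PI * Cq_term (PI * x) r m)).
  2:{ rewrite Series_scal_l. change (Series (Cq_term (PI * x) r)) with (Cq (PI * x) r). rewrite Cq_closed by auto. field. }
  assert (H1 : 0 < 1) by lra.
  apply (deriv_series (fun m y => Psi_term r y m) (fun m y => PI * Cq_term (PI * y) r m)
           (fun m => PI * r ^ m) x (mkposreal 1 H1)).
  - intros m y _. apply is_derive_Reals. unfold Psi_term, Cq_term.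
    replace (INR (m + 1) * (PI * y)) with (PI * INR (m + 1) * y) by ring.
    rewrite INR_m1. pose proof (pos_INR m).
    auto_derive. nra. field. lra.
  - intros m y _. rewrite Rabs_mult, Rabs_pos_eq by (pose proof PI_RGT_0; lra).
    apply Rmult_le_compat_l. pose proof PI_RGT_0; lra.
    apply Cq_term_bound; rewrite ?Rabs_pos_eq; lra.
  - apply ex_series_Mscal, ex_geom_b; auto.
  - intros y _. apply (ex_series_R_le _ (fun m => / (INR m + 1) ^ 2)).
    intro m; apply Psi_term_bound; rewrite Rabs_pos_eq; lra.
    apply ex_series_inv_sq.
  - apply Boule_center.
Qed.

Lemma Psi_lim x : is_lim_seq (fun k => Psi (1 - (/ (INR k + 2)) ^ 2) x) (Ssin 2 x).
Proof.
  set (Ps := fun s => Series (fun m => Psi_term (1 - s ^ 2) x m)).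
  assert (H1 : 0 < 1) by lra.
  assert (Hc : continuity_pt Ps 0).
  { apply (CVU_continuity (fun n s => sum_f_R0 (fun m => Psi_term (1 - s ^ 2) x m) n) Ps 0 (mkposreal 1 H1)).
    - apply (CVU_series (fun m s => Psi_term (1 - s ^ 2) x m) (fun m => / (INR m + 1) ^ 2)).
      + intros n y Hy. unfold Boule in Hy; simpl in Hy. rewrite Rminus_0_r in Hy.
        apply Psi_term_bound. apply Rabs_def2 in Hy.
        rewrite Rabs_pos_eq; nra.
      + apply ex_series_inv_sq.
    - intros n y _. apply (continuity_pt_finite_SF (fun m s => Psi_term (1 - s ^ 2) x m)).
      intros m _. apply cont_ex_derive. unfold Psi_term. auto_derive.
      exact I.
    - apply Boule_center. }
  assert (E0 : Ps 0 = Ssin 2 x).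
  { unfold Ps, Ssin. apply Series_ext. intro m. unfold Psi_term.
    replace (1 - 0 ^ 2) with 1 by ring. rewrite pow1, Rmult_1_r. reflexivity. }
  rewrite <- E0.
  apply is_lim_seq_Reals.
  apply (continuity_seq Ps (fun k => / (INR k + 2)) 0 Hc).
  apply is_lim_seq_Reals. apply lim_inv_lin.
Qed.

Lemma cos_lower a y : 0 <= a < 1 -> Rabs y < a -> cos (PI * a) <= cos (PI * y).
Proof.
  intros Ha Hy. pose proof PI_RGT_0.
  assert (E : cos (PI * y) = cos (PI * Rabs y)).
  { destruct (Rle_dec 0 y). rewrite Rabs_pos_eq by lra; auto.
    rewrite Rabs_left by lra. rewrite <- cos_neg. f_equal; ring. }
  rewrite E. left. apply cos_decreasing_1; pose proof (Rabs_pos y); nra.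
Qed.

Lemma cos_gt_m1 a : 0 <= a < 1 -> -1 < cos (PI * a).
Proof.
  intro Ha. pose proof PI_RGT_0. rewrite <- cos_PI. apply cos_decreasing_1; nra.
Qed.

Lemma Ssin2_deriv x : -1 < x < 1 ->
  derivable_pt_lim (Ssin 2) x (- (PI / 2) * ln (2 + 2 * cos (PI * x))).
Proof.
  intro Hx.
  set (a := (Rabs x + 1) / 2).
  assert (Ha : 0 < a < 1) by (unfold a; pose proof (Rabs_pos x); split; [lra|];
       destruct (Rle_dec 0 x); [rewrite Rabs_pos_eq in *|rewrite Rabs_left in *]; lra).
  assert (Hxa : Rabs x < a).
  { unfold a. destruct (Rle_dec 0 x); [rewrite Rabs_pos_eq|rewrite Rabs_left]; lra. }
  set (s := fun k : nat => / (INR k + 2)).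
  assert (Hs : forall k, 0 < s k <= 1 / 2).
  { intro k. unfold s. pose proof (pos_INR k). split. apply Rinv_0_lt_compat; lra.
    replace (1/2) with (/ 2) by field. apply Rinv_le_contravar; lra. }
  set (rho := fun k => 1 - s k ^ 2).
  set (d := 2 + 2 * cos (PI * a)).
  assert (Hd : 0 < d) by (unfold d; pose proof (cos_gt_m1 a ltac:(lra)); lra).
  apply (CVU_derivable (fun k y => Psi (rho k) y)
                       (fun k y => - (PI / 2) * ln (1 + 2 * rho k * cos (PI * y) + rho k ^ 2))
                       (Ssin 2) (fun y => - (PI / 2) * ln (2 + 2 * cos (PI * y))) 0 (mkposreal a (proj1 Ha))).
  - intros eps He.
    assert (Hl := lim_inv_lin 2). apply is_lim_seq_Reals in Hl.
    assert (He' : 0 < eps * d / (5 * PI)) by (pose proof PI_RGT_0; apply Rdiv_lt_0_compat; nra).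
    destruct (Hl _ He') as [N HN].
    exists N. intros k y Hk Hy. unfold Boule in Hy; simpl in Hy. rewrite Rminus_0_r in Hy.
    specialize (HN k Hk). unfold Rdist in HN. rewrite Rminus_0_r in HN. fold (s k) in HN.
    rewrite Rabs_pos_eq in HN by (pose proof (Hs k); lra).
    pose proof (Hs k) as Hsk.
    assert (Hc := cos_lower a y ltac:(lra) Hy). fold d in Hc.
    set (c := cos (PI * y)) in *.
    pose proof (COS_bound (PI * y)). fold c in H.
    set (sg := s k ^ 2).
    assert (Hsg : 0 < sg <= s k / 2) by (unfold sg; simpl; nra).
    assert (Hrho : rho k = 1 - sg) by reflexivity.
    rewrite Hrho.
    set (A := 2 + 2 * c). set (Ak := 1 + 2 * (1 - sg) * c + (1 - sg) ^ 2).
    assert (HA : d <= A) by (unfold A, d; lra).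
    assert (HAk : A / 2 <= Ak) by (unfold Ak, A; nra).
    assert (HAA : Rabs (Ak - A) <= 5 * sg).
    { unfold Ak, A. apply Rabs_le. split; nra. }
    replace (- (PI / 2) * ln A - - (PI / 2) * ln Ak) with ((PI / 2) * (ln Ak - ln A)) by ring.
    rewrite Rabs_mult, Rabs_pos_eq by (pose proof PI_RGT_0; lra).
    assert (L := ln_diff (A / 2) A Ak ltac:(lra) ltac:(lra) HAk).
    assert (Rabs (Ak - A) / (A / 2) <= 5 * sg / (d / 2)).
    { unfold Rdiv. apply Rmult_le_compat; auto using Rabs_pos.
      apply Rlt_le, Rinv_0_lt_compat; lra. apply Rinv_le_contravar; lra. }
    assert (5 * sg / (d / 2) < eps / PI).
    { apply Rmult_lt_reg_r with (d / 2). lra.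
      replace (5 * sg / (d / 2) * (d / 2)) with (5 * sg) by (field; lra).
      assert (s k * d < eps * d / (5 * PI) * d) by (apply Rmult_lt_compat_r; lra).
      pose proof PI_RGT_0.
      replace (eps / PI * (d / 2)) with (eps * d / (2 * PI)) by (field; lra).
      assert (eps * d / (2 * PI) = 5 / 2 * (eps * d / (5 * PI))) by (field; lra).
      lra. }
    pose proof PI_RGT_0.
    assert (HH : PI / 2 * Rabs (ln Ak - ln A) < PI / 2 * (eps / PI)).
    { apply Rmult_lt_compat_l. lra. lra. }
    replace (PI / 2 * (eps / PI)) with (eps / 2) in HH by (field; lra). lra.
  - intros y Hy. apply is_lim_seq_Reals. apply Psi_lim.
  - intros k y Hy. apply Psi_deriv. unfold rho. pose proof (Hs k). split; nra.
  - unfold Boule; simpl. rewrite Rminus_0_r. auto.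
Qed.

Lemma inv_pow_bound m k : (2 <= k)%nat -> / INR (m + 1) ^ k <= / (INR m + 1) ^ 2.
Proof.
  intro Hk. rewrite INR_m1. pose proof (pos_INR m).
  apply Rinv_le_contravar. nra. apply Rle_pow; auto; lra.
Qed.

Lemma sc_term_bound m k (f : R) : (2 <= k)%nat -> Rabs f <= 1 ->
  Rabs ((-1) ^ (m + 1) * f / INR (m + 1) ^ k) <= / (INR m + 1) ^ 2.
Proof.
  intros Hk Hf. eapply Rle_trans. 2: apply (inv_pow_bound m k Hk).
  pose proof (pos_INR m). rewrite INR_m1.
  unfold Rdiv. rewrite !Rabs_mult, abs_m1pow, Rabs_inv, (Rabs_pos_eq ((INR m + 1) ^ k)).
  2: apply pow_le; lra.
  assert (0 < / (INR m + 1) ^ k) by (apply Rinv_0_lt_compat, pow_lt; lra).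
  pose proof (Rabs_pos f). nra.
Qed.

Lemma Ssin_ex k x : (2 <= k)%nat -> ex_series (fun m => (-1) ^ (m + 1) * sin (PI * INR (m + 1) * x) / INR (m + 1) ^ k).
Proof.
  intro Hk. apply (ex_series_R_le _ (fun m => / (INR m + 1) ^ 2)).
  intro m. apply sc_term_bound; auto. apply Rabs_sin_le. apply ex_series_inv_sq.
Qed.

Lemma Scos_ex k x : (2 <= k)%nat -> ex_series (fun m => (-1) ^ (m + 1) * cos (PI * INR (m + 1) * x) / INR (m + 1) ^ k).
Proof.
  intro Hk. apply (ex_series_R_le _ (fun m => / (INR m + 1) ^ 2)).
  intro m. apply sc_term_bound; auto. apply Rabs_cos_le. apply ex_series_inv_sq.
Qed.

Lemma Ssin_deriv k x : (2 <= k)%nat -> derivable_pt_lim (Ssin (S k)) x (PI * Scos k x).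
Proof.
  intro Hk. unfold Scos. rewrite <- Series_scal_l.
  assert (H1 : 0 < 1) by lra.
  apply (deriv_series (fun m y => (-1) ^ (m + 1) * sin (PI * INR (m + 1) * y) / INR (m + 1) ^ (S k))
          (fun m y => PI * ((-1) ^ (m + 1) * cos (PI * INR (m + 1) * y) / INR (m + 1) ^ k))
          (fun m => PI * / (INR m + 1) ^ 2) x (mkposreal 1 H1)).
  - intros m y _. apply is_derive_Reals. rewrite INR_m1. pose proof (pos_INR m).
    assert (INR m + 1 <> 0) by lra. assert ((INR m + 1) ^ k <> 0) by (apply pow_nonzero; lra).
    auto_derive. simpl pow. split; auto. simpl pow. field. auto.
  - intros m y _. rewrite Rabs_mult, Rabs_pos_eq by (pose proof PI_RGT_0; lra).
    apply Rmult_le_compat_l. pose proof PI_RGT_0; lra. apply sc_term_bound; auto. apply Rabs_cos_le.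
  - apply ex_series_Mscal, ex_series_inv_sq.
  - intros y _. apply Ssin_ex. lia.
  - apply Boule_center.
Qed.

Lemma Scos_deriv k x : (2 <= k)%nat -> derivable_pt_lim (Scos (S k)) x (- PI * Ssin k x).
Proof.
  intro Hk. unfold Ssin. rewrite <- Series_scal_l.
  assert (H1 : 0 < 1) by lra.
  apply (deriv_series (fun m y => (-1) ^ (m + 1) * cos (PI * INR (m + 1) * y) / INR (m + 1) ^ (S k))
          (fun m y => - PI * ((-1) ^ (m + 1) * sin (PI * INR (m + 1) * y) / INR (m + 1) ^ k))
          (fun m => PI * / (INR m + 1) ^ 2) x (mkposreal 1 H1)).
  - intros m y _. apply is_derive_Reals. rewrite INR_m1. pose proof (pos_INR m).
    assert (INR m + 1 <> 0) by lra. assert ((INR m + 1) ^ k <> 0) by (apply pow_nonzero; lra).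
    auto_derive. simpl pow. split; auto. simpl pow. field. auto.
  - intros m y _. rewrite Rabs_mult, Rabs_Ropp, Rabs_pos_eq by (pose proof PI_RGT_0; lra).
    apply Rmult_le_compat_l. pose proof PI_RGT_0; lra. apply sc_term_bound; auto. apply Rabs_sin_le.
  - apply ex_series_Mscal, ex_series_inv_sq.
  - intros y _. apply Scos_ex. lia.
  - apply Boule_center.
Qed.

Lemma Ssin_0 k : Ssin k 0 = 0.
Proof. unfold Ssin. apply Series_zero. intro m. rewrite Rmult_0_r, sin_0. unfold Rdiv. ring. Qed.

Lemma Scos_0 k : (2 <= k)%nat -> Scos k 0 = - zetaE k.
Proof.
  intro Hk. unfold Scos, zetaE. rewrite <- Series_opp. apply Series_ext. intro m.
  rewrite Rmult_0_r, cos_0. replace (m + 1)%nat with (S m) by lia. simpl pow. unfold Rdiv. ring.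
Qed.

Definition Epoly (r : nat) (t : R) := sum_f_R0 (fun k => t ^ (k + 1) / INR (k + 1)) (r - 1).
Definition hj (j : nat) := INR (2 * j + 1) / 2.
Definition uL (r : nat) (y : R) (j : nat) :=
  hj j ^ (r - 1) * (ln (1 - y / hj j) + Epoly r (y / hj j) +
    (-1) ^ (r - 1) * (ln (1 - - (y / hj j)) + Epoly r (- (y / hj j)))).

Lemma hj_eq j : hj j = INR j + 1 / 2.
Proof. unfold hj. rewrite plus_INR, mult_INR. simpl. field. Qed.

Lemma hj_ge j : 1 / 2 <= hj j.
Proof. rewrite hj_eq. pose proof (pos_INR j). lra. Qed.

Lemma t_small y j : Rabs y < 1 / 2 -> Rabs (y / hj j) < 1.
Proof.
  intro Hy. pose proof (hj_ge j). unfold Rdiv. rewrite Rabs_mult, Rabs_inv, (Rabs_pos_eq (hj j)) by lra.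
  apply Rmult_lt_reg_r with (hj j). lra. rewrite Rmult_assoc, Rinv_l by lra. lra.
Qed.

Lemma factor_exp r y j : Rabs y < 1 / 2 -> mcos_factor r y (2 * j + 1) = exp (uL r y j).
Proof.
  intro Hy. assert (Ht := t_small y j Hy). apply Rabs_def2 in Ht.
  unfold mcos_factor, Pr, uL, Epoly, Rpower. cbv zeta. fold (hj j).
  set (t := y / hj j) in *.
  f_equal. f_equal.
  rewrite ln_mult. rewrite ln_mult, ln_exp, ln_exp, ln_mult, ln_exp. ring.
  lra. apply exp_pos. lra. apply exp_pos.
  apply Rmult_lt_0_compat; [lra|apply exp_pos]. apply exp_pos.
Qed.

Fixpoint psumU (r : nat) (y : R) (N : nat) : R :=
  match N with O => 0 | S n => psumU r y n + uL r y n end.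

Lemma partial_exp r y N : Rabs y < 1 / 2 -> mcos_partial r y N = exp (psumU r y N).
Proof.
  intro Hy. induction N; cbn [mcos_partial psumU]. rewrite exp_0; auto.
  rewrite IHN, factor_exp, exp_plus; auto.
Qed.

Lemma psumU_sum r y n : psumU r y (S n) = sum_f_R0 (uL r y) n.
Proof. induction n. simpl. ring. simpl psumU. simpl sum_f_R0. rewrite <- IHn. simpl. ring. Qed.

Lemma Epoly_deriv r t : derivable_pt_lim (Epoly r) t (sum_f_R0 (fun k => t ^ k) (r - 1)).
Proof.
  unfold Epoly.
  apply (deriv_sum (fun k t => t ^ (k + 1) / INR (k + 1)) (fun k t => t ^ k) t).
  intro k. apply is_derive_Reals. rewrite INR_m1. pose proof (pos_INR k).
  auto_derive. lra. replace (k + 1)%nat with (S k) by lia. simpl pred. rewrite S_INR. field. lra.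
Qed.

Lemma Epoly_is_derive r t : is_derive (Epoly r) t (sum_f_R0 (fun k => t ^ k) (r - 1)).
Proof. apply is_derive_Reals, Epoly_deriv. Qed.

Lemma uL_deriv r' y j : Rabs y < 1 / 2 ->
  derivable_pt_lim (fun y => uL (S r') y j) y (-2 * y ^ (S r') / (hj j ^ 2 - y ^ 2)).
Proof.
  intro Hy. assert (Ht := t_small y j Hy). apply Rabs_def2 in Ht. pose proof (hj_ge j).
  apply is_derive_Reals. unfold uL. replace (S r' - 1)%nat with r' by lia.
  auto_derive.
  - repeat split; try lra; eexists; apply Epoly_is_derive.
  - erewrite is_derive_unique; [|apply Epoly_is_derive].
    erewrite is_derive_unique; [|apply Epoly_is_derive].
    replace (S r' - 1)%nat with r' by lia.
    change (y * / hj j) with (y / hj j).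
    rewrite !tech3 by lra.
    set (h := hj j) in *.
    assert (Hh : 0 < h) by lra.
    assert (E1 : (y / h) ^ S r' = y ^ S r' / h ^ S r').
    { unfold Rdiv. rewrite Rpow_mult_distr, pow_inv. auto. }
    assert (E2 : (- (y / h)) ^ S r' = (-1) ^ S r' * (y ^ S r' / h ^ S r')).
    { rewrite <- E1. replace (- (y / h)) with (-1 * (y / h)) by ring. apply Rpow_mult_distr. }
    rewrite E2, E1. simpl pow.
    assert (HP : 0 < h ^ r') by (apply pow_lt; lra).
    assert (Hyh : Rabs y < h) by lra. apply Rabs_def2 in Hyh.
    set (P := h ^ r') in *. set (Y := y ^ r').
    destruct (Nat.Even_or_Odd r') as [[k ->]|[k ->]].
    + rewrite pow_1_even. field. repeat split; try lra. nra.
    + replace (2 * k + 1)%nat with (S (2 * k)) by lia. rewrite pow_1_odd. field. repeat split; try lra. nra.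
Qed.

Lemma mvt_abs (f f' : R -> R) a b M :
  (forall c, Rmin a b <= c <= Rmax a b -> derivable_pt_lim f c (f' c)) ->
  (forall c, Rmin a b <= c <= Rmax a b -> Rabs (f' c) <= M) ->
  Rabs (f b - f a) <= M * Rabs (b - a).
Proof.
  intros Hd HM.
  destruct (Rtotal_order a b) as [Hab|[Hab|Hab]].
  - rewrite Rmin_left, Rmax_right in * by lra.
    destruct (MVT_cor2 f f' a b Hab Hd) as [c [Hc1 Hc2]].
    rewrite Hc1, Rabs_mult. apply Rmult_le_compat_r. apply Rabs_pos. apply HM; lra.
  - subst. rewrite !Rminus_diag, Rabs_R0, Rmult_0_r. lra.
  - rewrite Rmin_right, Rmax_left in * by lra.
    destruct (MVT_cor2 f f' b a Hab Hd) as [c [Hc1 Hc2]].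
    rewrite (Rabs_minus_sym (f b)), (Rabs_minus_sym b a), Hc1, Rabs_mult.
    apply Rmult_le_compat_r. apply Rabs_pos. apply HM; lra.
Qed.

Lemma uL_0 r j : uL r 0 j = 0.
Proof.
  unfold uL, Epoly. replace (0 / hj j) with 0 by (unfold Rdiv; ring).
  replace (- 0) with 0 by ring. rewrite Rminus_0_r, ln_1.
  rewrite (sum_eq_R0 (fun k => 0 ^ (k + 1) / INR (k + 1))).
  ring. intros n _. rewrite pow_i by lia. unfold Rdiv. ring.
Qed.

Lemma uLd_bound r' y j b : 0 <= b < 1 / 2 -> Rabs y <= b ->
  Rabs (-2 * y ^ (S r') / (hj j ^ 2 - y ^ 2)) <= 2 / (1 / 4 - b ^ 2) * / (INR j + 1) ^ 2.
Proof.
  intros Hb Hy. rewrite hj_eq. pose proof (pos_INR j).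
  assert (Hy2 : y ^ 2 <= b ^ 2) by (rewrite <- pow2_abs; apply pow_incr; split; auto using Rabs_pos).
  assert (D : (INR j + 1) ^ 2 * (1 / 4 - b ^ 2) <= (INR j + 1 / 2) ^ 2 - y ^ 2) by nra.
  replace (2 / (1 / 4 - b ^ 2) * / (INR j + 1) ^ 2) with (2 / ((INR j + 1) ^ 2 * (1 / 4 - b ^ 2)))
    by (field; split; nra).
  apply div_bound.
  - rewrite Rabs_mult, <- RPow_abs. rewrite Rabs_left by lra.
    assert (Rabs y ^ S r' <= 1).
    { rewrite <- (pow1 (S r')). apply pow_incr. split. apply Rabs_pos. lra. }
    lra.
  - assert (b ^ 2 < 1 / 4) by nra. assert (0 < (INR j + 1) ^ 2) by nra.
    split. apply Rmult_lt_0_compat; lra. rewrite Rabs_pos_eq by nra. auto.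
Qed.

Lemma uL_ex r' y : Rabs y < 1 / 2 -> ex_series (uL (S r') y).
Proof.
  intro Hy.
  apply (ex_series_R_le _ (fun j => Rabs y * (2 / (1 / 4 - Rabs y ^ 2) * / (INR j + 1) ^ 2))).
  - intro j. replace (uL (S r') y j) with (uL (S r') y j - uL (S r') 0 j) by (rewrite uL_0; ring).
    replace (Rabs y) with (Rabs (y - 0)) by (rewrite Rminus_0_r; auto).
    rewrite Rmult_comm.
    apply (mvt_abs (fun z => uL (S r') z j) (fun z => -2 * z ^ (S r') / (hj j ^ 2 - z ^ 2)) 0 y).
    + intros c Hc. apply uL_deriv.
      assert (Rabs c <= Rabs y).
      { destruct (Rle_dec 0 y).
        - rewrite Rmin_left, Rmax_right in Hc by lra. rewrite !Rabs_pos_eq; lra.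
        - rewrite Rmin_right, Rmax_left in Hc by lra. rewrite !Rabs_left1; lra. }
      lra.
    + intros c Hc. apply uLd_bound; rewrite Rminus_0_r. split. apply Rabs_pos. lra.
      destruct (Rle_dec 0 y).
      * rewrite Rmin_left, Rmax_right in Hc by lra. rewrite !Rabs_pos_eq; lra.
      * rewrite Rmin_right, Rmax_left in Hc by lra. rewrite !Rabs_left1; lra.
  - apply ex_series_Mscal, ex_series_Mscal, ex_series_inv_sq.
Qed.

Definition Lr (r : nat) (y : R) := Series (uL r y).

Lemma L_deriv r' y : Rabs y < 1 / 2 ->
  derivable_pt_lim (Lr (S r')) y (Series (fun j => -2 * y ^ (S r') / (hj j ^ 2 - y ^ 2))).
Proof.
  intro Hy. set (b := (Rabs y + 1 / 2) / 2).
  assert (Hb : 0 < b < 1 / 2) by (unfold b; pose proof (Rabs_pos y); lra).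
  apply (deriv_series (fun j z => uL (S r') z j) (fun j z => -2 * z ^ (S r') / (hj j ^ 2 - z ^ 2))
     (fun j => 2 / (1 / 4 - b ^ 2) * / (INR j + 1) ^ 2) 0 (mkposreal b (proj1 Hb))).
  - intros j z Hz. unfold Boule in Hz; simpl in Hz. rewrite Rminus_0_r in Hz.
    apply uL_deriv. lra.
  - intros j z Hz. unfold Boule in Hz; simpl in Hz. rewrite Rminus_0_r in Hz.
    apply uLd_bound; lra.
  - apply ex_series_Mscal, ex_series_inv_sq.
  - intros z Hz. unfold Boule in Hz; simpl in Hz. rewrite Rminus_0_r in Hz. apply uL_ex. lra.
  - unfold Boule; simpl. rewrite Rminus_0_r. unfold b; lra.
Qed.

Lemma L_deriv_tan r' y : 0 < y < 1 / 2 ->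
  Series (fun j => -2 * y ^ (S r') / (hj j ^ 2 - y ^ 2)) = - y ^ r' * (PI * tan (PI * y)).
Proof.
  intro Hy. rewrite (Series_ext _ (fun j => - y ^ r' * Tterm y j)).
  rewrite Series_scal_l. f_equal. apply is_series_unique. apply tan_pf; auto.
  intro j. unfold Tterm. fold (hj j). simpl pow. unfold Rdiv. ring.
Qed.

Lemma psum_lim r' y : Rabs y < 1 / 2 -> is_lim_seq (psumU (S r') y) (Lr (S r') y).
Proof.
  intro Hy. apply is_lim_seq_incr_1.
  apply is_lim_seq_ext with (fun n => sum_f_R0 (uL (S r') y) n).
  intro n; rewrite psumU_sum; auto.
  apply series_lim, uL_ex; auto.
Qed.

Lemma mcos_lim r' y : Rabs y < 1 / 2 -> is_lim_seq (mcos_partial (S r') y) (exp (Lr (S r') y)).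
Proof.
  intro Hy. apply is_lim_seq_ext with (fun N => exp (psumU (S r') y N)).
  intro N; rewrite partial_exp; auto.
  apply is_lim_seq_continuous. apply derivable_continuous_pt, derivable_pt_exp.
  apply psum_lim; auto.
Qed.

Lemma cos_half_pos z : -1 < z < 1 -> 0 < cos (PI * z / 2).
Proof. intro Hz. pose proof PI_RGT_0. apply cos_gt_0; nra. Qed.

Lemma Ssin2_is_derive z : -1 < z < 1 -> is_derive (Ssin 2) z (- PI * ln (2 * cos (PI * z / 2))).
Proof.
  intro Hz. apply is_derive_Reals.
  replace (- PI * ln (2 * cos (PI * z / 2))) with (- (PI / 2) * ln (2 + 2 * cos (PI * z))).
  apply Ssin2_deriv; auto.
  assert (Hc := cos_half_pos z Hz).
  replace (2 + 2 * cos (PI * z)) with ((2 * cos (PI * z / 2)) * (2 * cos (PI * z / 2))).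
  rewrite ln_mult by lra. field.
  set (a := PI * z / 2). replace (PI * z) with (2 * a) by (unfold a; field). rewrite cos_2a_cos. ring.
Qed.

Lemma Scos3_is_derive z : is_derive (Scos 3) z (- PI * Ssin 2 z).
Proof. apply is_derive_Reals, Scos_deriv; lia. Qed.
Lemma Ssin4_is_derive z : is_derive (Ssin 4) z (PI * Scos 3 z).
Proof. apply is_derive_Reals, Ssin_deriv; lia. Qed.
Lemma Scos5_is_derive z : is_derive (Scos 5) z (- PI * Ssin 4 z).
Proof. apply is_derive_Reals, Scos_deriv; lia. Qed.

Lemma Lr0 r : Lr r 0 = 0.
Proof. unfold Lr. apply Series_zero. intro j; apply uL_0. Qed.

Lemma F_deriv r' z : -1 < z < 1 ->
  is_derive (fun z => Lr (S r') (z / 2)) z (/ 2 * Series (fun j => -2 * (z / 2) ^ (S r') / (hj j ^ 2 - (z / 2) ^ 2))).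
Proof.
  intro Hz.
  apply (is_derive_comp (Lr (S r')) (fun z => z / 2)).
  - apply is_derive_Reals. apply L_deriv. apply Rabs_def1; lra.
  - auto_derive. auto. field.
Qed.

Lemma match_G r' (G : R -> R) x : 0 <= x < 1 ->
  (forall z, -1 < z < 1 -> ex_derive G z) ->
  (forall z, 0 < z < 1 -> is_derive G z ((z / 2) ^ r' * (- (PI / 2) * tan (PI * z / 2)))) ->
  G 0 = 0 -> Lr (S r') (x / 2) = G x.
Proof.
  intros Hx HG HG' G0.
  set (D := fun z => Lr (S r') (z / 2) - G z).
  assert (HD : forall z, -1 < z < 1 -> ex_derive D z).
  { intros z Hz. unfold D. apply (ex_derive_minus (fun z => Lr (S r') (z / 2)) G).
    eexists; apply F_deriv; auto. apply HG; auto. }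
  assert (E := zero_deriv_eq D 0 x ltac:(lra)).
  assert (D x = D 0).
  { apply E.
    - intros z Hz. apply is_derive_Reals. unfold D.
      replace 0 with ((/ 2 * Series (fun j => -2 * (z / 2) ^ (S r') / (hj j ^ 2 - (z / 2) ^ 2)))
                      - (z / 2) ^ r' * (- (PI / 2) * tan (PI * z / 2))).
      apply (is_derive_minus (fun z => Lr (S r') (z / 2)) G). apply F_deriv; lra. apply HG'; lra.
      rewrite L_deriv_tan by lra. replace (PI * (z / 2)) with (PI * z / 2) by field. set (p := (z / 2) ^ r'). set (tt := tan (PI * z / 2)). field.
    - intros z Hz. apply cont_ex_derive. apply HD; lra. }
  unfold D in H. rewrite G0 in H. replace (0 / 2) with 0 in H by field. rewrite Lr0 in H. lra.
Qed.

Ltac rw_derives z Hz :=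
  repeat match goal with
  | |- context [Derive ?F ?w] =>
    lazymatch F with
    | (fun _ => Ssin 2 _) => rewrite (is_derive_unique F w _ (Ssin2_is_derive w Hz))
    | (fun _ => Scos 3 _) => rewrite (is_derive_unique F w _ (Scos3_is_derive w))
    | (fun _ => Ssin 4 _) => rewrite (is_derive_unique F w _ (Ssin4_is_derive w))
    | (fun _ => Scos 5 _) => rewrite (is_derive_unique F w _ (Scos5_is_derive w))
    end
  end.

Ltac side_derives z Hz :=
  repeat match goal with
  | |- _ /\ _ => split
  | |- True => exact I
  | |- 0 < 2 * cos _ => pose proof (cos_half_pos z Hz); lra
  | |- ex_derive ?F ?w =>
    lazymatch F with
    | (fun _ => Ssin 2 _) => exact (ex_intro _ _ (Ssin2_is_derive w Hz))
    | (fun _ => Scos 3 _) => exact (ex_intro _ _ (Scos3_is_derive w))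
    | (fun _ => Ssin 4 _) => exact (ex_intro _ _ (Ssin4_is_derive w))
    | (fun _ => Scos 5 _) => exact (ex_intro _ _ (Scos5_is_derive w))
    end
  end.

Ltac fin_alg z Hz :=
  pose proof (cos_half_pos z Hz); pose proof PI_RGT_0;
  unfold tan, Rdiv in *;
  set (LL := ln (2 * cos (PI * z * / 2))); set (cc := cos (PI * z * / 2)) in *;
  set (ss := sin (PI * z * / 2)); field; lra.

Definition G2 x := x / 2 * ln (2 * cos (PI * x / 2)) + 1 / (2 * PI) * Ssin 2 x.

Lemma G2_ok x : 0 <= x < 1 -> Lr 2 (x / 2) = G2 x.
Proof.
  intro Hx. apply (match_G 1 G2 x Hx).
  - intros z Hz. unfold G2. auto_derive. side_derives z Hz.
  - intros z Hz. assert (Hz' : -1 < z < 1) by lra. unfold G2. auto_derive. side_derives z Hz'.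
    rw_derives z Hz'. fin_alg z Hz'.
  - unfold G2. rewrite Ssin_0. field. pose proof PI_RGT_0; lra.
Qed.

Definition G3 x := (x / 2) ^ 2 * ln (2 * cos (PI * x / 2)) +
  (1 / (2 * PI ^ 2) * Scos 3 x + x / (2 * PI) * Ssin 2 x + 1 / (2 * PI ^ 2) * zetaE 3).

Lemma G3_ok x : 0 <= x < 1 -> Lr 3 (x / 2) = G3 x.
Proof.
  intro Hx. apply (match_G 2 G3 x Hx).
  - intros z Hz. unfold G3. auto_derive. side_derives z Hz.
  - intros z Hz. assert (Hz' : -1 < z < 1) by lra. unfold G3. auto_derive. side_derives z Hz'.
    rw_derives z Hz'. fin_alg z Hz'.
  - unfold G3. rewrite Ssin_0, Scos_0 by lia. field. pose proof PI_RGT_0; lra.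
Qed.

Definition G4 x := (x / 2) ^ 3 * ln (2 * cos (PI * x / 2)) +
  (3 * x / (4 * PI ^ 2) * Scos 3 x - 3 / (4 * PI ^ 3) * Ssin 4 x
          + 3 * x ^ 2 / (8 * PI) * Ssin 2 x).

Lemma G4_ok x : 0 <= x < 1 -> Lr 4 (x / 2) = G4 x.
Proof.
  intro Hx. apply (match_G 3 G4 x Hx).
  - intros z Hz. unfold G4. auto_derive. side_derives z Hz.
  - intros z Hz. assert (Hz' : -1 < z < 1) by lra. unfold G4. auto_derive. side_derives z Hz'.
    rw_derives z Hz'. fin_alg z Hz'.
  - unfold G4. rewrite !Ssin_0. field. pose proof PI_RGT_0; lra.
Qed.

Definition G5 x := (x / 2) ^ 4 * ln (2 * cos (PI * x / 2)) +
  (- (3 / (2 * PI ^ 4)) * Scos 5 x + 3 * x ^ 2 / (4 * PI ^ 2) * Scos 3 x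
          - 3 * x / (2 * PI ^ 3) * Ssin 4 x + x ^ 3 / (4 * PI) * Ssin 2 x
          - 3 / (2 * PI ^ 4) * zetaE 5).

Lemma G5_ok x : 0 <= x < 1 -> Lr 5 (x / 2) = G5 x.
Proof.
  intro Hx. apply (match_G 4 G5 x Hx).
  - intros z Hz. unfold G5. auto_derive. side_derives z Hz.
  - intros z Hz. assert (Hz' : -1 < z < 1) by lra. unfold G5. auto_derive. side_derives z Hz'.
    rw_derives z Hz'. fin_alg z Hz'.
  - unfold G5. rewrite !Ssin_0, !Scos_0 by lia. field. pose proof PI_RGT_0; lra.
Qed.

Lemma final_case r' x e E : 0 <= x < 1 ->
  Lr (S r') (x / 2) = e * ln (2 * cos (PI * x / 2)) + E ->
  is_lim_seq (mcos_partial (S r') (x / 2)) (Rpower (2 * cos (PI * x / 2)) e * exp E).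
Proof.
  intros Hx HL.
  replace (Rpower (2 * cos (PI * x / 2)) e * exp E) with (exp (Lr (S r') (x / 2))).
  apply mcos_lim. apply Rabs_def1; lra.
  rewrite HL. unfold Rpower. rewrite <- exp_plus. f_equal; ring.
Qed.

Theorem corollary2p13 (x : R) (hx0 : 0 <= x) (hx1 : x < 1) :
  let c := 2 * cos (PI * x / 2) in
  is_lim_seq (mcos_partial 2 (x / 2))
    (Rpower c (x / 2) * exp (1 / (2 * PI) * Ssin 2 x)) /\
  is_lim_seq (mcos_partial 3 (x / 2))
    (Rpower c ((x / 2) ^ 2) *
     exp (1 / (2 * PI ^ 2) * Scos 3 x + x / (2 * PI) * Ssin 2 x
          + 1 / (2 * PI ^ 2) * zetaE 3)) /\
  is_lim_seq (mcos_partial 4 (x / 2))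
    (Rpower c ((x / 2) ^ 3) *
     exp (3 * x / (4 * PI ^ 2) * Scos 3 x - 3 / (4 * PI ^ 3) * Ssin 4 x
          + 3 * x ^ 2 / (8 * PI) * Ssin 2 x)) /\
  is_lim_seq (mcos_partial 5 (x / 2))
    (Rpower c ((x / 2) ^ 4) *
     exp (- (3 / (2 * PI ^ 4)) * Scos 5 x + 3 * x ^ 2 / (4 * PI ^ 2) * Scos 3 x
          - 3 * x / (2 * PI ^ 3) * Ssin 4 x + x ^ 3 / (4 * PI) * Ssin 2 x
          - 3 / (2 * PI ^ 4) * zetaE 5)).
Proof.
  intro c. assert (Hx : 0 <= x < 1) by lra.
  split; [|split; [|split]].
  - apply (final_case 1). auto. apply G2_ok; auto.
  - apply (final_case 2). auto. apply G3_ok; auto.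
  - apply (final_case 3). auto. apply G4_ok; auto.
  - apply (final_case 4). auto. apply G5_ok; auto.
Qed.
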